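(* Let $\mathbb{X},\mathbb{Y}$ be real Banach spaces, $x\in S_{\mathbb{X}}$, $y\in S_{\mathbb{Y}}$. Then: (i) If $(x,y)$ is a CPP then $(x,y)$ is a weak CPP; the converse fails in general: in $\ell_\infty^2$, $((1,1),(1,-1))$ is a weak CPP but not a CPP. (ii) If $\mathbb{H}$ is a real Hilbert space, then for any $x,y\in S_{\mathbb{H}}$ the pair $(x,y)$ is a CPP, and $(r,1)$ is a CPP constant for it for every $r>0$. (iii) For every $x\in S_{\mathbb{X}}$, $(x,x)$ is a weak CPP; but $(x,x)$ need not be a CPP: in $\ell_\infty^2$, $((1,1),(1,1))$ is not a CPP. (iv) A pair need not be a weak CPP: in $\ell_\infty^2$, $((1,0),(1,1/2))$ is a weak CPP, but $((1,0),(1,1))$ is not a weak CPP. (v) If $(r_0,\mu_0)$ is a weak CPP constant (respectively, a CPP constant) for $(x,y)$, then $(r,\mu)$ is a weak CPP constant (respectively, a CPP constant) for $(x,y)$ for all $0<r\le r_0$ and $0<\mu\le\mu_0$. (vi) If $(x,y)$ is a CPP and $x$ is not an extreme point of $B_{\mathbb{X}}$, then $y$ is not an extreme point of $B_{\mathbb{Y}}$. The converse fails: in $\ell_\infty^2$, $((1,1),(1,0))$ is a CPP, $(1,0)$ is not an extreme point of $B_{\ell_\infty^2}$, while $(1,1)$ is an extreme point of $B_{\ell_\infty^2}$.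
   Context: All Banach spaces are real and of dimension greater than $1$. $B_{\mathbb{X}}$ and $S_{\mathbb{X}}$ denote the closed unit ball and unit sphere; $B(x,r)=\{u:\|u-x\|<r\}$. For $x,y\in\mathbb{X}$, $x\perp_B y$ (Birkhoff–James orthogonality) means $\|x+\lambda y\|\ge\|x\|$ for all $\lambda\in\mathbb{R}$, and $x^{\perp}=\{y\in\mathbb{X}: x\perp_B y\}$. For $x\in S_{\mathbb{X}}$, $y\in S_{\mathbb{Y}}$: $(x,y)$ is a weak CPP (weakly compatible point pair) if there exist $z\in x^\perp\cap S_{\mathbb{X}}$, $w\in y^\perp\cap S_{\mathbb{Y}}$ and constants $r>0,\mu>0$ such that for all $a,b\in\mathbb{R}$, $ax+bz\in B(x,r)\cap S_{\mathbb{X}}$ implies $\|ay+b\mu w\|\le 1$; any such $(r,\mu)$ is a weak CPP constant for $(x,y)$. $(x,y)$ is a CPP (compatible point pair) if there exist $r>0,\mu>0$ such that for all $z\in x^\perp\cap S_{\mathbb{X}}$, all $w\in y^\perp\cap S_{\mathbb{Y}}$ and all $a,b\in\mathbb{R}$, $ax+bz\in B(x,r)\cap S_{\mathbb{X}}$ implies $\|ay+b\mu w\|\le1$; any such $(r,\mu)$ is a CPP constant for $(x,y)$. $\ell_\infty^2$ is $\mathbb{R}^2$ with the max norm. *)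

(* Defs.v *)
From mathcomp Require Import all_boot all_order all_algebra.
From mathcomp Require Import all_classical all_reals all_analysis.
Import Order.TTheory GRing.Theory Num.Theory.
Set Implicit Arguments. Unset Strict Implicit. Unset Printing Implicit Defensive.
Local Open Scope ring_scope.

Section CPPDefs.
Variable R : realType.

Definition BJ_orth (X : normedModType R) (x y : X) : Prop :=
  forall l : R, `|x| <= `|x + l *: y|.

(* standing assumption: dimension greater than 1 (two linearly independent vectors) *)
Definition dim_gt1 (X : normedModType R) : Prop :=
  exists u v : X, forall a b : R, a *: u + b *: v = 0 -> a = 0 /\ b = 0.

Definition weak_cpp_const (X Y : normedModType R) (x : X) (y : Y) (r mu : R) : Prop :=
  0 < r /\ 0 < mu /\
  exists (z : X) (w : Y),
    BJ_orth x z /\ `|z| = 1 /\ BJ_orth y w /\ `|w| = 1 /\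
    forall a b : R,
      `|(a *: x + b *: z) - x| < r -> `|a *: x + b *: z| = 1 ->
      `|a *: y + b *: (mu *: w)| <= 1.

Definition weak_cpp (X Y : normedModType R) (x : X) (y : Y) : Prop :=
  exists r mu : R, weak_cpp_const x y r mu.

Definition cpp_const (X Y : normedModType R) (x : X) (y : Y) (r mu : R) : Prop :=
  0 < r /\ 0 < mu /\
  forall (z : X) (w : Y),
    BJ_orth x z -> `|z| = 1 -> BJ_orth y w -> `|w| = 1 ->
    forall a b : R,
      `|(a *: x + b *: z) - x| < r -> `|a *: x + b *: z| = 1 ->
      `|a *: y + b *: (mu *: w)| <= 1.

Definition cpp (X Y : normedModType R) (x : X) (y : Y) : Prop :=
  exists r mu : R, cpp_const x y r mu.

Definition extreme_point_ball (X : normedModType R) (x : X) : Prop :=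
  `|x| <= 1 /\
  forall (u v : X) (t : R), `|u| <= 1 -> `|v| <= 1 -> 0 < t < 1 ->
    x = t *: u + (1 - t) *: v -> u = v.

Definition is_inner_product (H : normedModType R) (ip : H -> H -> R) : Prop :=
  (forall x y : H, ip x y = ip y x) /\
  (forall (a : R) (x y z : H), ip (a *: x + y) z = a * ip x z + ip y z) /\
  (forall x : H, `|x| ^+ 2 = ip x x).

(* ell_infty^2: 'rV[R]_2 carries the max norm in MathComp-Analysis *)
Definition linf2 : normedModType R := 'rV[R]_2.
Definition vec2 (a b : R) : linf2 := \row_(i < 2) (if i == ord0 then a else b).

End CPPDefs.

(* Main.v *)
Require Import Defs.
From mathcomp Require Import all_boot all_order all_algebra.
From mathcomp Require Import all_classical all_reals all_analysis.
From mathcomp Require Import ring lra.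
Import Order.TTheory GRing.Theory Num.Theory Num.Def.
Local Open Scope ring_scope.


Section G.
Variable R : realType.
Variable X : normedModType R.
Implicit Types x z u : X.

Lemma orth_scale x z c : BJ_orth x z -> BJ_orth x (c *: z).
Proof. by move=> h l; rewrite scalerA; apply: h. Qed.

Lemma orth_coef x z a b : BJ_orth x z -> `|x| = 1 -> `|a| <= `|a *: x + b *: z|.
Proof.
move=> h x1; have [->|a0] := eqVneq a 0; first by rewrite normr0.
have -> : a *: x + b *: z = a *: (x + (b / a) *: z).
  by rewrite scalerDr scalerA mulrC divfK.
rewrite normrZ -{1}(mulr1 `|a|) ler_pM2l ?normr_gt0 //.
by rewrite -x1; apply: h.
Qed.

Lemma disj x d l1 l2 : `|x| = 1 -> 0 < l1 -> l2 < 0 ->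
  `|x + l1 *: d| < 1 -> `|x + l2 *: d| < 1 -> False.
Proof.
move=> x1 p1 n2 h1 h2.
have dne : l1 - l2 != 0 by rewrite subr_eq0 gt_eqF // (lt_trans n2 p1).
pose th := - l2 / (l1 - l2).
have th0 : 0 < th by rewrite /th divr_gt0 // ?oppr_gt0 // subr_gt0 (lt_trans n2 p1).
have th1 : 0 < 1 - th.
  rewrite /th subr_gt0 ltr_pdivrMr ?subr_gt0 ?(lt_trans n2 p1) //; lra.
have e1 : th + (1 - th) = 1 by ring.
have e2 : th * l1 + (1 - th) * l2 = 0 by rewrite /th; field.
have ev : th *: (x + l1 *: d) + (1 - th) *: (x + l2 *: d) = x.
  rewrite !scalerDr !scalerA addrACA -!scalerDl e1 e2 scale1r scale0r addr0 //.
have : `|x| < 1.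
  rewrite -ev; apply: le_lt_trans (ler_normD _ _) _.
  rewrite (normrZ th) (normrZ (1 - th)) (gtr0_norm th0) (gtr0_norm th1).
  have : th * `|x + l1 *: d| + (1 - th) * `|x + l2 *: d| < th * 1 + (1 - th) * 1.
    by apply: ltrD; rewrite ltr_pM2l.
  by rewrite !mulr1 e1.
move=> H; rewrite x1 in H; by rewrite ltxx in H.
Qed.

Lemma near_open x u t l : l != 0 -> `|x| = 1 ->
  `|x + l *: (u - t *: x)| < 1 -> exists2 e, 0 < e &
  forall t', `|t' - t| < e -> `|x + l *: (u - t' *: x)| < 1.
Proof.
move=> l0 x1 h; set n := `|x + l *: (u - t *: x)| in h.
exists ((1 - n) / `|l|); first by rewrite divr_gt0 ?normr_gt0 // subr_gt0.
move=> t' ht.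
have -> : x + l *: (u - t' *: x) = (x + l *: (u - t *: x)) + (l * (t - t')) *: x.
  rewrite !scalerDr !scalerN !scalerA mulrBr scalerBl -!addrA.
  by congr (_ + _); congr (_ + _); rewrite addrA addNr add0r.
apply: le_lt_trans (ler_normD _ _) _.
rewrite normrZ x1 mulr1 normrM distrC.
have : `|l| * `|t' - t| < `|l| * ((1 - n) / `|l|) by rewrite ltr_pM2l ?normr_gt0.
rewrite [X in _ < X -> _]mulrC divfK ?normr_eq0 // => H.
rewrite -/n; lra.
Qed.

Lemma big_t x u t : `|x| = 1 -> `|u| < `|t| ->
  `|x + (2 * t)^-1 *: (u - t *: x)| < 1.
Proof.
move=> x1 ut.
have t0 : t != 0 by rewrite -normr_gt0; apply: le_lt_trans ut.
have -> : x + (2 * t)^-1 *: (u - t *: x) = 2^-1 *: x + (2 * t)^-1 *: u.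
  rewrite scalerDr scalerN scalerA.
  have -> : (2 * t)^-1 * t = 2^-1 by field.
  rewrite addrCA addrC; congr (_ + _).
  by rewrite -{1}(scale1r x) -scalerBl; congr (_ *: _); field.
apply: le_lt_trans (ler_normD _ _) _.
rewrite !normrZ x1 mulr1 (ger0_norm (x:=2^-1)) ?invr_ge0 // normfV normrM (ger0_norm (x:=2)) //.
have tp : 0 < `|t| by apply: le_lt_trans ut.
have : `|u| / `|t| < 1 by rewrite ltr_pdivrMr // mul1r.
have -> : (2 * `|t|)^-1 * `|u| = 2^-1 * (`|u| / `|t|) by field; rewrite gt_eqF.
lra.
Qed.


Lemma indep_vec x : dim_gt1 X -> exists u, forall t, u - t *: x != 0.
Proof.
case=> u0 [v0 hind].
case: (pselect (exists s, u0 = s *: x)) => [[s hs]|hn]; last first.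
  exists u0 => t; apply/negP => /eqP h; apply: hn; exists t.
  by apply/eqP; rewrite -subr_eq0 h.
case: (pselect (exists s, v0 = s *: x)) => [[t ht]|hn]; last first.
  exists v0 => t'; apply/negP => /eqP h; apply: hn; exists t'.
  by apply/eqP; rewrite -subr_eq0 h.
have := hind t (- s); rewrite hs ht !scalerA mulNr scaleNr [t * s]mulrC subrr.
case=> // t0 /eqP; rewrite oppr_eq0 => /eqP s0; move: hs; rewrite s0 scale0r => u00.
have := hind 1 0; rewrite u00 scaler0 scale0r addr0.
by case=> // /eqP; rewrite oner_eq0.
Qed.

Lemma exists_orth x : dim_gt1 X -> `|x| = 1 ->
  exists z, BJ_orth x z /\ `|z| = 1.
Proof.
move=> hd x1; have [u hu] := indep_vec x hd.
pose A := fun t : R => exists l, 0 < l /\ `|x + l *: (u - t *: x)| < 1.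
pose B := fun t : R => exists l, l < 0 /\ `|x + l *: (u - t *: x)| < 1.
have AB : forall t, A t -> B t -> False.
  by move=> t [l1 [p1 h1]] [l2 [n2 h2]]; exact: (disj _ _ _ _ x1 p1 n2 h1 h2).
have Aop : forall t, A t -> exists2 e, 0 < e & forall t', `|t' - t| < e -> A t'.
  move=> t [l [lp h]]; have [e e0 he] := near_open _ _ _ _ (lt0r_neq0 lp) x1 h.
  by exists e => // t' /he; exists l.
have Bop : forall t, B t -> exists2 e, 0 < e & forall t', `|t' - t| < e -> B t'.
  move=> t [l [lp h]]; have [e e0 he] := near_open _ _ _ _ (ltr0_neq0 lp) x1 h.
  by exists e => // t' /he; exists l.
have Bne : B (- (`|u| + 1)).
  exists ((2 * - (`|u| + 1))^-1); split.
    by rewrite invr_lt0; have := normr_ge0 u; lra.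
  by apply: big_t => //; rewrite normrN ger0_norm ?ltrDl // addr_ge0.
have Bub : ubound B (`|u| + 1).
  move=> t Bt; rewrite leNgt; apply/negP => tlt.
  apply: (AB t) => //; exists ((2 * t)^-1); split.
    by rewrite invr_gt0; have := normr_ge0 u; lra.
  apply: big_t => //; have := normr_ge0 u => ?.
  by rewrite gtr0_norm; lra.
have hs : has_sup B by split; [exists (- (`|u| + 1)) | exists (`|u| + 1)].
pose s := sup B.
have nB : ~ B s.
  move=> /Bop [e e0 he].
  have : B (s + e / 2) by apply: he; rewrite addrC addKr normrM !gtr0_norm //; lra.
  move/(sup_upper_bound hs); rewrite -/s; lra.
have nA : ~ A s.
  move=> /Aop [e e0 he].
  have [b Bb bl] := sup_adherent e0 hs.
  have bs : b <= s := sup_upper_bound hs Bb.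
  apply: (AB b) => //; apply: he; rewrite ler0_norm ?subr_le0 //; rewrite -/s in bl; lra.
have ds : u - s *: x != 0 := hu s.
have orth : BJ_orth x (u - s *: x).
  move=> l; rewrite x1 leNgt; apply/negP => hl.
  have [l0|l0|l0] := ltgtP l 0.
  - by apply: nB; exists l.
  - by apply: nA; exists l.
  - by move: hl; rewrite l0 scale0r addr0 x1 ltxx.
exists (`|u - s *: x|^-1 *: (u - s *: x)); split; first exact: orth_scale.
by rewrite normrZ normfV normr_id mulVf // normr_eq0.
Qed.

End G.


Section H.
Variable R : realType.
Variable H : normedModType R.
Variable ip : H -> H -> R.
Hypothesis hip : is_inner_product ip.

Lemma ip0 z : ip 0 z = 0.
Proof.
case: hip => _ [hl _]; have := hl 1 0 0 z.
rewrite scaler0 addr0 mul1r => h; lra.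
Qed.

Lemma ipD x y z : ip (x + y) z = ip x z + ip y z.
Proof. by case: hip => _ [hl _]; have := hl 1 x y z; rewrite scale1r mul1r. Qed.

Lemma ipZ a x z : ip (a *: x) z = a * ip x z.
Proof. by case: hip => _ [hl _]; rewrite -[a *: x]addr0 hl ip0 addr0. Qed.

Lemma ip_expand a b x z :
  `|a *: x + b *: z| ^+ 2 = a ^+ 2 * ip x x + 2 * a * b * ip x z + b ^+ 2 * ip z z.
Proof.
case: hip => hs [_ hn]; rewrite hn !ipD !ipZ.
rewrite (hs x) (hs z) !ipD !ipZ (hs z x); ring.
Qed.

Lemma ip_orth x z : `|x| = 1 -> `|z| = 1 -> BJ_orth x z -> ip x z = 0.
Proof.
move=> x1 z1 o; case: hip => hs [_ hn].
have xx : ip x x = 1 by rewrite -hn x1 expr1n.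
have zz : ip z z = 1 by rewrite -hn z1 expr1n.
have h := o (- ip x z); rewrite -{2}[x]scale1r in h.
have : `|x| ^+ 2 <= `|1 *: x + (- ip x z) *: z| ^+ 2.
  by rewrite !expr2; apply: ler_pM.
rewrite ip_expand xx zz x1 => h2.
have : ip x z ^+ 2 <= 0 by lra.
by rewrite le_eqVlt ltNge sqr_ge0 orbF sqrf_eq0 => /eqP.
Qed.

End H.


Ltac crush := repeat match goal with
  | |- context [Num.norm (?a : Num.NumDomain.sort _)] => case: (ler0P a)
  | |- context [Order.max ?a ?b] => case: (leP a b)
  | |- context [Order.min ?a ?b] => case: (leP a b)
  end; try lra.

Section V.
Variable R : realType.

Lemma vec2D (a b c d : R) : vec2 a b + vec2 c d = vec2 (a + c) (b + d).
Proof. by apply/rowP => i; rewrite !mxE; case: ifP. Qed.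
Lemma vec2B (a b c d : R) : vec2 a b - vec2 c d = vec2 (a - c) (b - d).
Proof. by apply/rowP => i; rewrite !mxE; case: ifP. Qed.
Lemma vec2Z (l a b : R) : l *: vec2 a b = vec2 (l * a) (l * b).
Proof. by apply/rowP => i; rewrite !mxE; case: ifP. Qed.




Lemma rv_ge (v : 'rV[R]_2) (i : 'I_2) : `|v ord0 i| <= `|v|.
Proof.
rewrite [leRHS]/normr /= mx_normrE; apply/bigmax_geP; right => /=.
by exists (ord0, i).
Qed.

Lemma rv_le (v : 'rV[R]_2) c : 0 <= c -> `|v ord0 ord0| <= c ->
  `|v ord0 (lift ord0 ord0)| <= c -> `|v| <= c.
Proof.
move=> c0 h0 h1; rewrite [leLHS]/normr /= mx_normrE.
elim/big_ind: _ => //.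
  by move=> a b ha hb; rewrite ge_max ha hb.
case=> i j _ /=.
have -> : i = ord0 by apply/val_inj; case: i => [[]].
case: j => [[|[|//]] jp] /=.
  by have -> : Ordinal jp = ord0 by apply/val_inj.
by have -> : Ordinal jp = lift ord0 ord0 by apply/val_inj.
Qed.

Lemma normv2 (a b : R) : `|vec2 a b| = Num.max `|a| `|b|.
Proof.
apply/le_anti/andP; split.
  apply: rv_le; first by rewrite le_max normr_ge0.
    by rewrite mxE /= le_max lexx.
  by rewrite mxE /= le_max lexx orbT.
rewrite ge_max; apply/andP; split.
  by have := rv_ge (vec2 a b) ord0; rewrite mxE.
by have := rv_ge (vec2 a b) (lift ord0 ord0); rewrite mxE.
Qed.

End V.


Ltac vsimp := rewrite ?vec2Z ?vec2D ?vec2B ?normv2 ?normrN ?normr1 ?maxxx.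

Section C.
Variable R : realType.
Implicit Types x y c : R.

Lemma nlt x y c : Num.max `|x| `|y| < c -> [/\ -c < x, x < c, -c < y & y < c].
Proof. by move=> h; split; move: h; crush. Qed.
Lemma nle x y c : Num.max `|x| `|y| <= c -> [/\ -c <= x, x <= c, -c <= y & y <= c].
Proof. by move=> h; split; move: h; crush. Qed.
Lemma neq x y c : Num.max `|x| `|y| = c ->
  [/\ -c <= x, x <= c, -c <= y & y <= c] /\ (x = c \/ x = -c \/ y = c \/ y = -c).
Proof. by move=> h; split; [split|]; move: h; crush. Qed.
Lemma nleI x y c : -c <= x -> x <= c -> -c <= y -> y <= c -> Num.max `|x| `|y| <= c.
Proof. crush. Qed.
Lemma ngeI x y c : (c <= x \/ x <= -c \/ c <= y \/ y <= -c) -> c <= Num.max `|x| `|y|.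
Proof. crush. Qed.
Lemma ngtI x y c : (c < x \/ x < -c \/ c < y \/ y < -c) -> c < Num.max `|x| `|y|.
Proof. crush. Qed.
Lemma neqI x y c : 0 <= c -> -c <= x -> x <= c -> -c <= y -> y <= c ->
  (x = c \/ x = -c \/ y = c \/ y = -c) -> Num.max `|x| `|y| = c.
Proof. crush. Qed.

Lemma vec2_eta (v : linf2 R) : exists p q, v = vec2 p q.
Proof.
exists (v ord0 ord0), (v ord0 (lift ord0 ord0)); apply/rowP => i; rewrite !mxE.
case: i => [[|[|//]] ip] /=.
  by congr (v _ _); apply/val_inj.
by congr (v _ _); apply/val_inj.
Qed.

Lemma small_e (r : R) : 0 < r -> exists e : R, [/\ 0 < e, e < r & e <= 1/2].
Proof. move=> r0; exists (Num.min r 1 / 2); split; move: r0; crush. Qed.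

Lemma i_b1 : weak_cpp (vec2 (R:=R) 1 1) (vec2 1 (-1)).
Proof.
exists 1, 1; split; [lra|split; [lra|]].
exists (vec2 1 (-1)), (vec2 1 1); split; [|split; [|split; [|split]]].
- by move=> l; vsimp; apply: ngeI; lra.
- by vsimp.
- by move=> l; vsimp; apply: ngeI; lra.
- by vsimp.
- move=> a b; vsimp => /nlt[? ? ? ?] /neq[[? ? ? ?] ?].
  apply: nleI; lra.
Qed.


Lemma nge x y c : c <= Num.max `|x| `|y| -> (c <= x \/ x <= -c \/ c <= y \/ y <= -c).
Proof. crush. Qed.
Lemma nltI x y c : -c < x -> x < c -> -c < y -> y < c -> Num.max `|x| `|y| < c.
Proof. crush. Qed.

Lemma vec2_inj (a b c d : R) : vec2 a b = vec2 c d -> a = c /\ b = d.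
Proof.
move/rowP => h; have := h ord0; have := h (lift ord0 ord0); rewrite !mxE /=.
by move=> -> ->.
Qed.

Lemma n11 : `|vec2 (R:=R) 1 1| = 1. Proof. by rewrite normv2 normr1 maxxx. Qed.
Lemma n1m : `|vec2 (R:=R) 1 (-1)| = 1. Proof. by rewrite normv2 normrN normr1 maxxx. Qed.
Lemma n10 : `|vec2 (R:=R) 1 0| = 1. Proof. by rewrite normv2; crush. Qed.
Lemma n01 : `|vec2 (R:=R) 0 1| = 1. Proof. by rewrite normv2; crush. Qed.
Lemma nm0 : `|vec2 (R:=R) (-1) 0| = 1. Proof. by rewrite normv2; crush. Qed.
Lemma n1h : `|vec2 (R:=R) 1 (1/2)| = 1. Proof. by rewrite normv2; crush. Qed.

Lemma orth0 (c p q : R) : BJ_orth (vec2 1 c) (vec2 p q) -> `|c| < 1 ->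
  `|vec2 p q| = 1 -> p = 0.
Proof.
move=> o c1 n1; case: (eqVneq p 0) => // p0; exfalso.
move: n1; rewrite normv2 => /neq[[? ? ? ?] _].
have [k [k0 k1]] : exists k : R, 0 < k /\ k < 1 - `|c|.
  by exists ((1 - `|c|) / 2); split; lra.
have pp : 0 < p * p by rewrite lt_def mulf_neq0 //= -expr2 sqr_ge0.
have pp1 : p * p <= 1 by nra.
have h1 : 0 < k * (p * p) by rewrite mulr_gt0.
have h2 : k * (p * p) <= k by rewrite ler_piMr // ltW.
have pq : -1 <= p * q <= 1 by apply/andP; split; nra.
have h3 : - k <= k * (p * q) <= k.
  case/andP: pq => ? ?; apply/andP; split; nra.
case/andP: h3 => h3 h4.
have := o (- (k * p)); rewrite vec2Z vec2D !normv2 normr1.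
have m1 : 1 <= Num.max 1 `|c| by rewrite le_max lexx.
move/(le_trans m1)/nge; move: c1 k1; crush.
Qed.

Lemma i_b2 : ~ cpp (vec2 (R:=R) 1 1) (vec2 1 (-1)).
Proof.
move=> [r [mu [r0 [mu0 h]]]].
have [e [e0 er e1]] := small_e _ r0.
have em : 0 < e * mu by rewrite mulr_gt0.
have o1 : BJ_orth (vec2 (R:=R) 1 1) (vec2 1 0).
  by move=> l; rewrite n11 vec2Z vec2D normv2; apply: ngeI; lra.
have o2 : BJ_orth (vec2 (R:=R) 1 (-1)) (vec2 (-1) 0).
  by move=> l; rewrite n1m vec2Z vec2D normv2; apply: ngeI; lra.
have := h _ _ o1 n10 o2 nm0 1 (- e); vsimp => H.
have /nle[? ? ? ?] := H ltac:(apply: nltI; lra) ltac:(apply: neqI; lra); lra.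
Qed.

Lemma iii_b : ~ cpp (vec2 (R:=R) 1 1) (vec2 1 1).
Proof.
move=> [r [mu [r0 [mu0 h]]]].
have [e [e0 er e1]] := small_e _ r0.
have em : 0 < e * mu by rewrite mulr_gt0.
have o1 : BJ_orth (vec2 (R:=R) 1 1) (vec2 1 0).
  by move=> l; rewrite n11 vec2Z vec2D normv2; apply: ngeI; lra.
have o2 : BJ_orth (vec2 (R:=R) 1 1) (vec2 (-1) 0).
  by move=> l; rewrite n11 vec2Z vec2D normv2; apply: ngeI; lra.
have := h _ _ o1 n10 o2 nm0 1 (- e); vsimp => H.
have /nle[? ? ? ?] := H ltac:(apply: nltI; lra) ltac:(apply: neqI; lra); lra.
Qed.

Lemma iv_a : weak_cpp (vec2 (R:=R) 1 0) (vec2 1 (1/2)).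
Proof.
exists (1/2), 1; split; [lra|split; [lra|]].
exists (vec2 0 1), (vec2 0 1); split; [|split; [|split; [|split]]].
- by move=> l; rewrite n10 vec2Z vec2D normv2; apply: ngeI; lra.
- exact: n01.
- by move=> l; rewrite n1h vec2Z vec2D normv2; apply: ngeI; lra.
- exact: n01.
- move=> a b; vsimp => /nlt[? ? ? ?] /neq[[? ? ? ?] ?].
  apply: nleI; lra.
Qed.

Lemma iv_b : ~ weak_cpp (vec2 (R:=R) 1 0) (vec2 1 1).
Proof.
move=> [r [mu [r0 [mu0 [z [w [oz [z1 [ow [w1 h]]]]]]]]]].
have [p [q zE]] := vec2_eta z; have [c [d wE]] := vec2_eta w; subst z w.
have p0 : p = 0 by apply: (orth0 _ _ _ oz) => //; rewrite normr0 ltr01.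
subst p.
move: z1; rewrite normv2 => /neq[_ hq].
have {}hq : q = 1 \/ q = -1 by lra.
move: w1; rewrite normv2 => /neq[_ hw].
have [e [e0 er e1]] := small_e _ r0.
have em : 0 < e * mu by rewrite mulr_gt0.
have [b [hb1 hb2]] : exists b, (b = e \/ b = -e) /\
    (e * mu <= b * (mu * c) \/ e * mu <= b * (mu * d)).
  by case: hw => [->|[->|[->|->]]]; [exists e|exists (-e)|exists e|exists (-e)];
     split; lra.
have := h 1 b; vsimp.
move: hb2; case: hq => ->; case: hb1 => -> => hb2 H;
have /nle[? ? ? ?] := H ltac:(apply: nltI; lra) ltac:(apply: neqI; lra); lra.
Qed.

Lemma vi_b1 : cpp (vec2 (R:=R) 1 1) (vec2 1 0).
Proof.
exists 1, (1/2); split; [lra|split; [lra|]].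
move=> z w oz z1 ow w1 a b _ hn.
have [p [q zE]] := vec2_eta z; have [c [d wE]] := vec2_eta w; subst z w.
have c0 : c = 0 by apply: (orth0 _ _ _ ow) => //; rewrite normr0 ltr01.
subst c.
have ha : `|a| <= 1 by rewrite -hn; apply: orth_coef => //; exact: n11.
have /andP[a1 a2] : -1 <= a <= 1 by rewrite -ler_norml.
move: w1; rewrite normv2 => /neq[[? ? ? ?] _].
move: z1; rewrite normv2 => /neq[_ hp].
move: hn; vsimp => /neq[[? ? ? ?] _].
have hb : `|b| <= 2.
  rewrite ler_norml; apply/andP.
  by case: hp => [E|[E|[E|E]]]; subst; split; lra.
have hd : `|d| <= 1 by rewrite ler_norml; apply/andP; split.
have hbd : `|b * (1/2 * d)| <= 1.
  rewrite !normrM normr1 mul1r (ger0_norm (x := 2^-1)) //.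
  have : `|b| * (2^-1 * `|d|) <= 2 * (2^-1 * 1).
    by apply: ler_pM; rewrite ?normr_ge0 ?mulr_ge0 ?invr_ge0 ?ler_pM2l ?invr_gt0.
  lra.
move: hbd; rewrite ler_norml => /andP[? ?].
vsimp; apply: nleI; lra.
Qed.

Lemma vi_b2 : ~ extreme_point_ball (vec2 (R:=R) 1 0).
Proof.
move=> [_ h].
have h0 : 0 < 1/2 :> R by lra. have h1 : 1/2 < 1 :> R by lra.
have hu : `|vec2 (R:=R) 1 1| <= 1 by rewrite n11.
have hv : `|vec2 (R:=R) 1 (-1)| <= 1 by rewrite n1m.
have E : vec2 (R:=R) 1 0 = 1/2 *: vec2 1 1 + (1 - 1/2) *: vec2 1 (-1).
  by rewrite !vec2Z vec2D; congr vec2; lra.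
by have /vec2_inj[_] := h _ _ _ hu hv (introT andP (conj h0 h1)) E; lra.
Qed.

Lemma conv1 (t a b : R) : 0 < t -> t < 1 -> a <= 1 -> b <= 1 ->
  t * a + (1 - t) * b = 1 -> a = 1 /\ b = 1.
Proof.
move=> t0 t1 a1 b1 e.
have h1 : 0 <= t * (1 - a) by apply: mulr_ge0; lra.
have h2 : 0 <= (1 - t) * (1 - b) by apply: mulr_ge0; lra.
have z1 : t * (1 - a) = 0 by lra.
have z2 : (1 - t) * (1 - b) = 0 by lra.
move/eqP: z1; rewrite mulf_eq0 => /orP[/eqP|/eqP]; first lra.
move/eqP: z2; rewrite mulf_eq0 => /orP[/eqP|/eqP]; first lra.
lra.
Qed.

Lemma vi_b3 : extreme_point_ball (vec2 (R:=R) 1 1).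
Proof.
split; first by rewrite n11.
move=> u v t hu hv /andP[t0 t1] e.
have [u1 [u2 uE]] := vec2_eta u; have [v1 [v2 vE]] := vec2_eta v; subst u v.
move: e; rewrite !vec2Z vec2D => /vec2_inj [e1 e2].
move: hu hv; rewrite !normv2 => /nle[? ? ? ?] /nle[? ? ? ?].
have [-> ->] := conv1 t u1 v1 t0 t1 ltac:(lra) ltac:(lra) (esym e1).
by have [-> ->] := conv1 t u2 v2 t0 t1 ltac:(lra) ltac:(lra) (esym e2).
Qed.

End C.



Section Gen.
Variable R : realType.

Lemma hilbert_const (H : normedModType R) (ip : H -> H -> R) :
  is_inner_product ip -> forall (x y : H) (r : R),
  `|x| = 1 -> `|y| = 1 -> 0 < r -> cpp_const x y r 1.
Proof.
move=> hip x y r x1 y1 r0; split=> //; split=> //.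
move=> z w oz z1 ow w1 a b _ hn.
have hx : ip x x = 1 by case: hip => _ [_ hn']; rewrite -hn' x1 expr1n.
have hy : ip y y = 1 by case: hip => _ [_ hn']; rewrite -hn' y1 expr1n.
have hz : ip z z = 1 by case: hip => _ [_ hn']; rewrite -hn' z1 expr1n.
have hw : ip w w = 1 by case: hip => _ [_ hn']; rewrite -hn' w1 expr1n.
have := ip_expand _ _ _ hip a b x z; rewrite hn hx hz (ip_orth _ _ _ hip _ _ x1 z1 oz) expr1n => e1.
have := ip_expand _ _ _ hip a b y w; rewrite hy hw (ip_orth _ _ _ hip _ _ y1 w1 ow) => e2.
rewrite scale1r; have := normr_ge0 (a *: y + b *: w); nra.
Qed.

Lemma shrink (Y : normedModType R) (y w : Y) (a b mu mu0 : R) :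
  `|y| = 1 -> `|a| <= 1 -> 0 < mu -> mu <= mu0 ->
  `|a *: y + b *: (mu0 *: w)| <= 1 -> `|a *: y + b *: (mu *: w)| <= 1.
Proof.
move=> y1 a1 m0 mm h.
have mu00 : 0 < mu0 by apply: lt_le_trans mm.
pose th := mu / mu0.
have th0 : 0 <= th by rewrite /th divr_ge0 // ltW.
have th1 : th <= 1 by rewrite /th ler_pdivrMr // mul1r.
have th2 : 0 <= 1 - th by lra.
have E : a *: y + b *: (mu *: w) = th *: (a *: y + b *: (mu0 *: w)) + (1 - th) *: (a *: y).
  rewrite !scalerDr !scalerA addrAC -scalerDl.
  have -> : th * a + (1 - th) * a = a by ring.
  by congr (_ + _ *: _); rewrite /th; field; rewrite gt_eqF.
rewrite E; apply: le_trans (ler_normD _ _) _.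
rewrite normrZ (ger0_norm th0) normrZ (ger0_norm th2) normrZ y1 mulr1.
have : th * `|a *: y + b *: (mu0 *: w)| <= th * 1 by rewrite ler_wpM2l.
have : (1 - th) * `|a| <= (1 - th) * 1 by rewrite ler_wpM2l.
lra.
Qed.

Lemma part_v (X Y : normedModType R) (x : X) (y : Y) :
  `|x| = 1 -> `|y| = 1 -> forall r0 mu0 : R,
      (weak_cpp_const x y r0 mu0 ->
         forall r mu : R, 0 < r <= r0 -> 0 < mu <= mu0 -> weak_cpp_const x y r mu) /\
      (cpp_const x y r0 mu0 ->
         forall r mu : R, 0 < r <= r0 -> 0 < mu <= mu0 -> cpp_const x y r mu).
Proof.
move=> x1 y1 r0 mu0; split.
  move=> [_ [_ [z [w [oz [z1 [ow [w1 h]]]]]]]] r mu /andP[rp rr] /andP[mp mm].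
  split=> //; split=> //; exists z, w; do 4 (split=> //).
  move=> a b hd hn; apply: (shrink _ _ _ _ _ _ _ y1 _ mp mm).
    by rewrite -hn; apply: orth_coef.
  by apply: h => //; apply: lt_le_trans rr.
move=> [_ [_ h]] r mu /andP[rp rr] /andP[mp mm].
split=> //; split=> // z w oz z1 ow w1 a b hd hn.
apply: (shrink _ _ _ _ _ _ _ y1 _ mp mm).
  by rewrite -hn; apply: orth_coef.
by apply: h => //; apply: lt_le_trans rr.
Qed.

Lemma part_ia (X Y : normedModType R) (x : X) (y : Y) :
  dim_gt1 X -> dim_gt1 Y -> `|x| = 1 -> `|y| = 1 -> cpp x y -> weak_cpp x y.
Proof.
move=> hX hY x1 y1 [r [mu [r0 [mu0 h]]]].
have [z [oz z1]] := exists_orth _ _ x hX x1.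
have [w [ow w1]] := exists_orth _ _ y hY y1.
exists r, mu; split=> //; split=> //; exists z, w; do 4 (split=> //).
exact: h.
Qed.

Lemma part_iiia (X : normedModType R) (x : X) :
  dim_gt1 X -> `|x| = 1 -> weak_cpp x x.
Proof.
move=> hX x1; have [z [oz z1]] := exists_orth _ _ x hX x1.
exists 1, 1; split=> //; split=> //; exists z, z; do 4 (split=> //).
by move=> a b _ hn; rewrite scale1r hn.
Qed.

End Gen.


Section VI.
Variable R : realType.

Lemma seg_le (X : normedModType R) (x u v : X) (t s : R) :
  `|u| <= 1 -> `|v| <= 1 -> x = t *: u + (1 - t) *: v ->
  `|s| <= Num.min t (1 - t) -> `|x + s *: (v - u)| <= 1.
Proof.
move=> hu hv e hs.
have s1 : `|s| <= t by apply: le_trans hs _; rewrite ge_min lexx.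
have s2 : `|s| <= 1 - t by apply: le_trans hs _; rewrite ge_min lexx orbT.
have c1 : 0 <= t - s by move: s1; rewrite ler_norml => /andP[? ?]; lra.
have c2 : 0 <= 1 - t + s by move: s2; rewrite ler_norml => /andP[? ?]; lra.
have -> : x + s *: (v - u) = (t - s) *: u + (1 - t + s) *: v.
  rewrite e scalerBr [in RHS]scalerBl [in RHS]scalerDl.
  by rewrite [RHS]addrACA [X in _ = _ + X]addrC.
apply: le_trans (ler_normD _ _) _; rewrite !normrZ (ger0_norm c1) (ger0_norm c2).
have : (t - s) * `|u| <= (t - s) * 1 by rewrite ler_wpM2l.
have : (1 - t + s) * `|v| <= (1 - t + s) * 1 by rewrite ler_wpM2l.
lra.
Qed.

Lemma seg_eq (X : normedModType R) (x u v : X) (t s : R) :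
  `|x| = 1 -> `|u| <= 1 -> `|v| <= 1 -> x = t *: u + (1 - t) *: v ->
  `|s| <= Num.min t (1 - t) -> `|x + s *: (v - u)| = 1.
Proof.
move=> x1 hu hv e hs; apply/le_anti/andP; split; first exact: seg_le hu hv e hs.
have h2 : `|x + (- s) *: (v - u)| <= 1 by apply: seg_le hu hv e _; rewrite normrN.
have E : x = 2^-1 *: (x + s *: (v - u)) + 2^-1 *: (x + (- s) *: (v - u)).
  rewrite -scalerDr scaleNr addrACA subrr addr0 -{2 3}[x]scale1r -scalerDl scalerA.
  have -> : (2^-1 * (1 + 1) : R) = 1 by field. by rewrite scale1r.
have : `|x| <= 2^-1 * `|x + s *: (v - u)| + 2^-1 * 1.
  rewrite {1}E; apply: le_trans (ler_normD _ _) _; rewrite !normrZ.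
  rewrite ger0_norm ?invr_ge0 // lerD2l ler_wpM2l ?invr_ge0 //.
rewrite x1; lra.
Qed.

Lemma seg_orth (X : normedModType R) (x u v : X) (t : R) :
  `|x| = 1 -> `|u| <= 1 -> `|v| <= 1 -> x = t *: u + (1 - t) *: v ->
  0 < t -> t < 1 -> BJ_orth x (v - u).
Proof.
move=> x1 hu hv e t0 t1 l.
set dl := Num.min t (1 - t).
have d0 : 0 < dl by rewrite /dl lt_min; apply/andP; split; lra.
have [ll|ll] := leP `|l| dl; first by rewrite (@seg_eq X x u v t l x1 hu hv e ll) x1.
have l0 : 0 < `|l| by apply: lt_trans ll.
pose k := dl / `|l|.
have k0 : 0 < k by rewrite divr_gt0.
have k1 : k < 1 by rewrite /k ltr_pdivrMr // mul1r.
have kl : `|k * l| <= dl by rewrite normrM (gtr0_norm k0) /k divfK ?gt_eqF.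
have := @seg_eq X x u v t (k * l) x1 hu hv e kl.
have -> : x + (k * l) *: (v - u) = (1 - k) *: x + k *: (x + l *: (v - u)).
  by rewrite [in RHS]scalerDr [in RHS]scalerA [RHS]addrA -[in RHS]scalerDl subrK scale1r.
move=> h.
have : 1 <= (1 - k) * 1 + k * `|x + l *: (v - u)|.
  rewrite -{1}h; apply: le_trans (ler_normD _ _) _.
  rewrite (normrZ (1 - k)) (normrZ k) (gtr0_norm k0) (ger0_norm (x := 1 - k)) ?x1 //; lra.
rewrite x1 => H.
have : k * 1 <= k * `|x + l *: (v - u)| by lra.
by rewrite ler_pM2l // mulr1.
Qed.

Lemma part_via (X Y : normedModType R) (x : X) (y : Y) :
  dim_gt1 Y -> `|x| = 1 -> `|y| = 1 ->
  cpp x y -> ~ extreme_point_ball x -> ~ extreme_point_ball y.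
Proof.
move=> hY x1 y1 [r [mu [r0 [mu0 h]]]] nex ey.
have [u [v [t [hu [hv [t0 [t1 [e uv]]]]]]]] : exists u v t, `|u| <= 1 /\ `|v| <= 1 /\
    0 < t /\ t < 1 /\ x = t *: u + (1 - t) *: v /\ u <> v.
  apply: contrapT => H; apply: nex; split; first by rewrite x1.
  move=> u v t hu hv /andP[t0 t1] e; apply: contrapT => uv; apply: H.
  by exists u, v, t.
have d0 : v - u != 0 by rewrite subr_eq0; apply/eqP => E; apply: uv.
set d := v - u in d0.
have od : BJ_orth x d := @seg_orth X x u v t x1 hu hv e t0 t1.
set dl := Num.min t (1 - t).
have dl0 : 0 < dl by rewrite /dl lt_min; apply/andP; split; lra.
have nd : 0 < `|d| by rewrite normr_gt0.
pose z := `|d|^-1 *: d.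
have oz : BJ_orth x z by exact: orth_scale.
have z1 : `|z| = 1 by rewrite normrZ normfV normr_id mulVf // gt_eqF.
have [w [ow w1]] := exists_orth _ _ y hY y1.
pose be := Num.min (r / 2) (dl * `|d|).
have be0 : 0 < be by rewrite lt_min; apply/andP; split; [lra | rewrite mulr_gt0].
have ber : be < r.
  have : be <= r / 2 by rewrite /be ge_min lexx.
  lra.
have bed : be <= dl * `|d| by rewrite /be ge_min lexx orbT.
have key : forall b, `|b| = be -> `|1 *: y + b *: (mu *: w)| <= 1.
  move=> b hb; apply: (h _ _ oz z1 ow w1).
    by rewrite scale1r addrAC subrr add0r normrZ z1 mulr1 hb.
  rewrite scale1r /z scalerA; apply: (@seg_eq X x u v t _ x1 hu hv e).
  rewrite normrM normfV normr_id hb ler_pdivrMr //.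
have bm : 0 < be * mu by rewrite mulr_gt0.
have k1 := key be (gtr0_norm be0).
have k2 := key (- be) ltac:(by rewrite normrN gtr0_norm).
rewrite scale1r scalerA in k1; rewrite scale1r scalerA in k2.
have h0 : 0 < 1/2 :> R by lra.
have h1 : 1/2 < 1 :> R by lra.
have E : y = 1/2 *: (y + (be * mu) *: w) + (1 - 1/2) *: (y + (- be * mu) *: w).
  rewrite !scalerDr !scalerA addrACA -!scalerDl.
  have -> : 1/2 + (1 - 1/2) = 1 :> R by field.
  have -> : 1/2 * (be * mu) + (1 - 1/2) * (- be * mu) = 0 :> R by field.
  by rewrite scale1r scale0r addr0.
have := (proj2 ey) _ _ (1/2) k1 k2 (introT andP (conj h0 h1)) E.
move/addrI/eqP; rewrite -subr_eq0 -scalerBl scaler_eq0 => /orP[/eqP|/eqP w0].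
  lra.
by move: w1; rewrite w0 normr0 => /eqP; rewrite eq_sym oner_eq0.
Qed.
End VI.

Theorem mainTheorem1 (R : realType) :
  (* (i) *)
  ((forall (X Y : completeNormedModType R) (x : X) (y : Y),
      dim_gt1 X -> dim_gt1 Y -> `|x| = 1 -> `|y| = 1 ->
      cpp x y -> weak_cpp x y) /\
   weak_cpp (vec2 (R:=R) 1 1) (vec2 1 (-1)) /\ ~ cpp (vec2 (R:=R) 1 1) (vec2 1 (-1))) /\
  (* (ii) *)
  (forall (H : completeNormedModType R) (ip : H -> H -> R),
      dim_gt1 H -> is_inner_product ip ->
      forall x y : H, `|x| = 1 -> `|y| = 1 ->
      cpp x y /\ forall r : R, 0 < r -> cpp_const x y r 1) /\
  (* (iii) *)
  ((forall (X : completeNormedModType R) (x : X),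
      dim_gt1 X -> `|x| = 1 -> weak_cpp x x) /\
   ~ cpp (vec2 (R:=R) 1 1) (vec2 1 1)) /\
  (* (iv) *)
  (weak_cpp (vec2 (R:=R) 1 0) (vec2 1 (1/2)) /\ ~ weak_cpp (vec2 (R:=R) 1 0) (vec2 1 1)) /\
  (* (v) *)
  (forall (X Y : completeNormedModType R) (x : X) (y : Y),
      dim_gt1 X -> dim_gt1 Y -> `|x| = 1 -> `|y| = 1 ->
      forall r0 mu0 : R,
      (weak_cpp_const x y r0 mu0 ->
         forall r mu : R, 0 < r <= r0 -> 0 < mu <= mu0 -> weak_cpp_const x y r mu) /\
      (cpp_const x y r0 mu0 ->
         forall r mu : R, 0 < r <= r0 -> 0 < mu <= mu0 -> cpp_const x y r mu)) /\
  (* (vi) *)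
  ((forall (X Y : completeNormedModType R) (x : X) (y : Y),
      dim_gt1 X -> dim_gt1 Y -> `|x| = 1 -> `|y| = 1 ->
      cpp x y -> ~ extreme_point_ball x -> ~ extreme_point_ball y) /\
   (cpp (vec2 (R:=R) 1 1) (vec2 1 0) /\ ~ extreme_point_ball (vec2 (R:=R) 1 0) /\
    extreme_point_ball (vec2 (R:=R) 1 1))).
Proof.
split.
  split.
    by move=> X Y x y hX hY x1 y1; apply: part_ia.
  by split; [exact: i_b1 | exact: i_b2].
split.
  move=> H ip hH hip x y x1 y1; split.
    by exists 1, 1; apply: (hilbert_const _ _ _ hip x y 1 x1 y1 ltr01).
  by move=> r r0; apply: (hilbert_const _ _ _ hip x y r x1 y1 r0).
split.
  by split; [move=> X x hX x1; apply: part_iiia | exact: iii_b].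
split.
  by split; [exact: iv_a | exact: iv_b].
split.
  by move=> X Y x y _ _ x1 y1; apply: part_v.
split.
  by move=> X Y x y hX hY x1 y1; apply: part_via.
by split; [exact: vi_b1 | split; [exact: vi_b2 | exact: vi_b3]].
Qed.
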